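(* Every nonzero element $a$ of a finite additive poset $A$ can be written as a sum of pairwise independent atoms of $A$. Moreover, in any such expansion of $a$, all the atoms lie in the tail $A_a$ of $a$.
   Context: An additive poset is a pair $(A,\le)$ where $A$ is an abelian group and $\le$ is a partial order on $A$ such that for all $a,b,c\in A$: $(\ast)$ if $b\le a$ and $c\le a$ then $b+c\le a$; $(\ast\ast)$ if $a\le b$ and $a\le c$ then $a\le a+b+c$. The tail of $a$ is $A_a=\{x:x\le a\}$. Elements $x,y$ are independent if $x\le x+y$. An atom is a nonzero $x$ with $A_x=\{0,x\}$. *)

(* Defs.v *)
From HB Require Import structures.
From mathcomp Require Import all_boot all_order all_algebra.
Set Implicit Arguments. Unset Strict Implicit. Unset Printing Implicit Defensive.
Import GRing.Theory.
Local Open Scope ring_scope.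

Definition additive_poset (A : zmodType) (le : rel A) : Prop :=
  [/\ reflexive le, antisymmetric le, transitive le,
      (forall a b c : A, le b a -> le c a -> le (b + c) a) &
      (forall a b c : A, le a b -> le a c -> le a (a + b + c))].

Definition tail (A : finZmodType) (le : rel A) (a : A) : {set A} :=
  [set x | le x a].

Definition independent (A : zmodType) (le : rel A) (x y : A) : Prop :=
  le x (x + y).

Definition atom (A : finZmodType) (le : rel A) (x : A) : Prop :=
  x != 0 /\ tail le x = [set 0; x].

Definition atomic_expansion (A : finZmodType) (le : rel A) (a : A)
    (S : {set A}) : Prop :=
  [/\ (forall x, x \in S -> atom le x),
      (forall x y, x \in S -> y \in S -> x != y -> independent le x y) &
      \sum_(x in S) x = a].

(* Main.v *)
Require Import Defs.
From mathcomp Require Import all_boot all_order all_algebra all_fingroup.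
Import GRing.Theory.
Local Open Scope ring_scope.

Lemma ap_add {A : finZmodType} {le : rel A} (hA : additive_poset le) a b c :
  le b a -> le c a -> le (b + c) a.
Proof. by case: hA => _ _ _ H _; apply: H. Qed.

Lemma ap_trans {A : finZmodType} {le : rel A} (hA : additive_poset le) a b c :
  le a b -> le b c -> le a c.
Proof. by case: hA => _ _ H _ _ h1 h2; apply: H h1 h2. Qed.

Lemma ap_refl {A : finZmodType} {le : rel A} (hA : additive_poset le) a : le a a.
Proof. by case: hA => H _ _ _ _; apply: H. Qed.

Lemma ap_anti {A : finZmodType} {le : rel A} (hA : additive_poset le) a b :
  le a b -> le b a -> a = b.
Proof. by case: hA => _ H _ _ _ h1 h2; apply: H; rewrite h1 h2. Qed.

Lemma ap_star2 {A : finZmodType} {le : rel A} (hA : additive_poset le) a b c :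
  le a b -> le a c -> le a (a + b + c).
Proof. by case: hA => _ _ _ _ H; apply: H. Qed.

Lemma ap_mul {A : finZmodType} {le : rel A} (hA : additive_poset le) a b k :
  le b a -> le (b *+ k.+1) a.
Proof.
move=> hb; elim: k => [|k IH]; first by rewrite mulr1n.
by rewrite mulrS; apply: ap_add.
Qed.

Lemma ap_opp {A : finZmodType} {le : rel A} (hA : additive_poset le) a b :
  le b a -> le (- b) a.
Proof.
move=> hb.
have ho := order_gt0 b.
have e : b *+ #[b]%g = 0 by rewrite -FinRing.zmodXgE expg_order.
have e2 : - b = b *+ (#[b]%g.-1 + #[b]%g.-1).+1.
  rewrite -addSn prednK // mulrnDr e add0r.
  apply/eqP; rewrite eq_sym -subr_eq0 opprK.
  by rewrite -mulrSr prednK // e.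
by rewrite e2; apply: ap_mul.
Qed.

Lemma ap_sub {A : finZmodType} {le : rel A} (hA : additive_poset le) a b c :
  le b a -> le c a -> le (b - c) a.
Proof. by move=> hb hc; apply: ap_add => //; apply: ap_opp. Qed.

Lemma ap_zero {A : finZmodType} {le : rel A} (hA : additive_poset le) a :
  le 0 a.
Proof.
have h := ap_refl hA a.
by rewrite -(subrr a); apply: ap_sub.
Qed.

Lemma atom2 {A : finZmodType} {le : rel A} (hA : additive_poset le) (x : A) :
  atom le x -> x + x = 0.
Proof.
case=> nx e.
have h : x + x \in tail le x.
  by rewrite inE; apply: ap_add => //; apply: ap_refl.
move: h; rewrite e !inE => /orP[/eqP //|/eqP h].
have : x = 0 by apply: (addrI x); rewrite addr0.
by move=> x0; move: nx; rewrite x0 eqxx.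
Qed.

Lemma indep_sym {A : finZmodType} {le : rel A} (hA : additive_poset le) (x y : A) :
  le x (x + y) -> le y (y + x).
Proof.
move=> h; rewrite [y + x]addrC.
have e : x + y - x = y by rewrite addrC addKr.
by have := ap_sub hA _ _ _ (ap_refl hA (x + y)) h; rewrite e.
Qed.

Lemma part2 {A : finZmodType} {le : rel A} (hA : additive_poset le) (a : A) S x :
  atomic_expansion le a S -> x \in S -> le x a.
Proof.
case=> hat hind hsum xS.
have x2 := atom2 hA _ (hat x xS).
rewrite -hsum (bigD1 x xS) /=.
apply: (big_ind (fun s => le x (x + s))).
- by rewrite addr0; apply: ap_refl.
- move=> s t hs ht.
  have := ap_star2 hA _ _ _ hs ht.
  suff -> : x + (x + s) + (x + t) = x + (s + t) by [].
  by rewrite [x + (x + s)]addrA x2 add0r addrCA.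
- move=> y /andP[yS yx]; apply: hind => //; by rewrite eq_sym.
Qed.

Lemma atom_below {A : finZmodType} {le : rel A} (hA : additive_poset le) (a : A) :
  a != 0 -> exists x, atom le x /\ le x a.
Proof.
move=> ha.
have P0 : (a != 0) && le a a by rewrite ha ap_refl.
case: (@arg_minnP _ a (fun b => (b != 0) && le b a) (fun b => #|tail le b|) P0) => b /andP[nb ba] hmin.
exists b; split => //; split => //.
apply/setP => c; rewrite !inE.
apply/idP/idP.
- move=> cb; have [->|nc] := eqVneq c 0; first by [].
  have ca := ap_trans hA _ _ _ cb ba.
  have := hmin c; rewrite nc ca => /(_ isT) hle.
  have sub : tail le c \subset tail le b.
    by apply/subsetP => z; rewrite !inE => zc; apply: ap_trans hA _ _ _ zc cb.
  have eq : tail le c = tail le b by apply/eqP; rewrite eqEcard sub hle.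
  have : b \in tail le c by rewrite eq inE ap_refl.
  by rewrite inE => bc; rewrite (ap_anti hA _ _ cb bc) eqxx.
- by case/orP => /eqP ->; [apply: ap_zero | apply: ap_refl].
Qed.

Lemma existence {A : finZmodType} {le : rel A} (hA : additive_poset le) n :
  forall a : A, (#|tail le a| <= n)%N -> a != 0 ->
  exists S : {set A}, atomic_expansion le a S.
Proof.
elim: n => [|n IH] a hn ha.
  have h : a \in tail le a by rewrite inE ap_refl.
  by move: hn; rewrite leqn0 => /eqP /cards0_eq E; rewrite E inE in h.
have [x [xat xa]] := atom_below hA _ ha.
have x2 := atom2 hA _ xat.
have xn0 : x != 0 by case: xat.
set c := a - x.
have ecx : x + c = a by rewrite /c addrC subrK.
have ca : le c a by apply: ap_sub => //; apply: ap_refl.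
have [c0|cn0] := eqVneq c 0.
  exists [set x]; split.
  - by move=> y; rewrite inE => /eqP ->.
  - by move=> y z; rewrite !inE => /eqP -> /eqP ->; rewrite eqxx.
  - by rewrite big_set1 -ecx c0 addr0.
have nac : ~~ le a c.
  apply/negP => ac; have := ap_anti hA _ _ ca ac.
  by rewrite /c => /eqP; rewrite -subr_eq0 addrAC subrr add0r oppr_eq0 (negPf xn0).
have hlt : (#|tail le c| < #|tail le a|)%N.
  apply: proper_card; apply/properP; split.
    by apply/subsetP => z; rewrite !inE => zc; apply: ap_trans hA _ _ _ zc ca.
  by exists a; rewrite !inE ?ap_refl.
have hcn : (#|tail le c| <= n)%N by rewrite -ltnS; apply: leq_trans hlt hn.
have [S' hS'] := IH c hcn cn0.
have hSc : forall y, y \in S' -> le y c by move=> y yS; apply: part2 hA _ _ _ hS' yS.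
case: hS' => hat hind hsum.
have cc : le c (- c).
  have := ap_opp hA _ _ (ap_refl hA (- c)); by rewrite opprK.
have yx : forall y, y \in S' -> le y (y + x).
  move=> y yS; have yc := hSc y yS.
  have := ap_star2 hA _ _ _ (ap_trans hA _ _ _ yc ca) (ap_trans hA _ _ _ yc cc).
  by rewrite -addrA -ecx addrK.
have xS : x \notin S'.
  apply/negP => xS; apply/negP: nac.
  rewrite -ecx negbK; apply: (ap_add hA); [exact: hSc | exact: (ap_refl hA)].
exists (x |: S'); split.
- by move=> y; rewrite !inE => /orP[/eqP ->|/hat].
- move=> y z; rewrite !inE => /orP[/eqP ->|yS] /orP[/eqP ->|zS].
  + by rewrite eqxx.
  + by move=> _; apply: indep_sym hA _ _ (yx z zS).
  + by move=> _; apply: yx.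
  + by apply: hind.
- by rewrite big_setU1 //= hsum ecx.
Qed.

Theorem theorem6p3 (A : finZmodType) (le : rel A) (hA : additive_poset le)
    (a : A) (ha : a != 0) :
  (exists S : {set A}, atomic_expansion le a S) /\
  (forall S : {set A}, atomic_expansion le a S -> S \subset tail le a).
Proof.
split; first exact: (existence hA #|tail le a| a (leqnn _) ha).
move=> S hS; apply/subsetP => x xS; rewrite inE.
exact: part2 hA _ _ _ hS xS.
Qed.
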